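(* Let $k\ge 1$, $n=2^{k+1}$, and run Jakobsson's pebble-update procedure (with its $k+1$ pebbles) for exactly $n/2$ steps. Then every pebble that has not been discarded satisfies $\mathrm{Position}=\mathrm{Destination}$.
   Context: Jakobsson's pebble-update procedure (hash-chain preimage traversal). Fix $K\ge 1$ and $N=2^K$ (in the claim, $N=n$ and $K=k+1$). There are $K$ pebbles, identified by their initial label $j\in\{1,\dots,K\}$. Pebble $j$ has two fixed constants $S_j=3\cdot 2^j$ (start increment) and $D_j=2^{j+1}$ (destination increment), and two integer fields $\mathrm{Position}$ and $\mathrm{Destination}$ (which may be set to $+\infty$). Initially $\mathrm{Position}=\mathrm{Destination}=2^j$ for pebble $j$, and a counter $c$ equals $0$. The pebbles are kept sorted by $\mathrm{Position}$, and ''the first pebble'' means the pebble with the smallest $\mathrm{Position}$. One step: (i) if $c=N$, stop; otherwise $c\leftarrow c+1$; (ii) for every pebble with $\mathrm{Position}\ne\mathrm{Destination}$, set $\mathrm{Position}\leftarrow\mathrm{Position}-2$; (iii) if $c$ is even, the first pebble (say with initial label $j$) makes a backward move: $\mathrm{Position}\leftarrow \mathrm{Position}+S_j$, $\mathrm{Destination}\leftarrow\mathrm{Destination}+D_j$; if the new Destination exceeds $N$, both fields are set to $+\infty$ and the pebble is said to be discarded; then the pebbles are re-sorted by $\mathrm{Position}$. (Each pebble also stores a hash-chain value, which does not influence the evolution of the Position and Destination fields.) *)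

(* Defs.v *)
From HB Require Import structures.
From mathcomp Require Import all_boot all_order all_algebra.
Set Implicit Arguments. Unset Strict Implicit. Unset Printing Implicit Defensive.
Import Order.TTheory GRing.Theory Num.Theory.

(* Extended integers: [None] stands for +infinity. *)
Definition xint := option int.

Definition xle (a b : xint) : bool :=
  match a, b with
  | _, None => true
  | None, Some _ => false
  | Some x, Some y => (x <= y)%R
  end.

Definition pebble := (nat * xint * xint)%type.
Definition Pebble (j : nat) (pos dst : xint) : pebble := (j, pos, dst).
Definition label (p : pebble) : nat := p.1.1.
Definition position (p : pebble) : xint := p.1.2.
Definition destination (p : pebble) : xint := p.2.

Definition S_inc (j : nat) : nat := 3 * 2 ^ j.
Definition D_inc (j : nat) : nat := 2 ^ j.+1.

Definition xadd (a : xint) (m : nat) : xint :=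
  match a with None => None | Some x => Some (x + (Posz m))%R end.

Definition sort_pebbles (l : seq pebble) : seq pebble :=
  sort (fun p q => xle (position p) (position q)) l.

Definition advance (p : pebble) : pebble :=
  if position p == destination p then p
  else Pebble (label p)
         (match position p with None => None | Some x => Some (x - 2)%R end)
         (destination p).

Definition backward (N : nat) (p : pebble) : pebble :=
  let j := label p in
  let np := xadd (position p) (S_inc j) in
  let nd := xadd (destination p) (D_inc j) in
  if xle nd (Some (Posz N)) then Pebble j np nd else Pebble j None None.

Definition state := (nat * seq pebble)%type.

Definition init_state (K : nat) : state :=
  (0, [seq Pebble j (Some (Posz (2 ^ j))) (Some (Posz (2 ^ j))) | j <- iota 1 K]).

(* One step of the procedure with N = 2^K. The "first pebble" is the
   pebble of smallest Position; ties (if any) are broken by the current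
   order of the list (stable sort). *)
Definition step (N : nat) (s : state) : state :=
  let: (c, l) := s in
  if c == N then s
  else
    let c' := c.+1 in
    let l1 := sort_pebbles (map advance l) in
    if ~~ odd c' then
      match l1 with
      | [::] => (c', l1)
      | p :: rest => (c', sort_pebbles (backward N p :: rest))
      end
    else (c', l1).

Definition run (K t : nat) : state := iter t (step (2 ^ K)) (init_state K).

Definition discarded (p : pebble) : bool := destination p == None.

(* Main.v *)
Require Import Defs.
From HB Require Import structures.
From mathcomp Require Import all_boot all_order all_algebra.
From Stdlib Require Import Lia.
Set Implicit Arguments. Unset Strict Implicit.

Ltac slia := intros; repeat match goal with
 | H : is_true (leq _ _) |- _ => move/leP: H => H
 | H : (leq _ _) = true |- _ => move/leP: H => H
 | H : (leq _ _) = false |- _ => move/negbT: H => H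
 | H : is_true (~~ (leq _ _)) |- _ => rewrite -ltnNge in H
 end; try (apply/leP); repeat match goal with H : ?P |- _ => match type of P with Prop => revert H end end;
 rewrite -?plusE -?minusE -?multE; intros; lia.

Definition fq (N j q r : nat) : pebble :=
  if q == 0 then Pebble j (Some (Posz (2^j))) (Some (Posz (2^j)))
  else if N < q * 2^j.+1 + 2^j then Pebble j None None
  else Pebble j (Some (Posz (q * 2^j.+1 + 2^j + (2^j - 2 * r))))
                (Some (Posz (q * 2^j.+1 + 2^j))).

Definition fp (N j t : nat) : pebble :=
  fq N j ((t + 2^j) %/ 2^j.+1) ((t + 2^j) %% 2^j.+1).

Lemma subz2 (X : nat) : 2 <= X -> (Posz X - 2)%R = Posz (X - 2).
Proof. move=> h. by rewrite -subzn. Qed.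

Lemma pow_even j : 0 < j -> exists a, 2 ^ j = 2 * a.
Proof. case: j => // j _. exists (2^j). by rewrite expnS. Qed.

Lemma qr_next t A B q r : 0 < B -> t + A = q * B + r -> r.+1 < B ->
  (t.+1 + A) %/ B = q /\ (t.+1 + A) %% B = r.+1.
Proof.
move=> hB e hr. have -> : t.+1 + A = q * B + r.+1 by slia.
by rewrite divnMDl // modnMDl divn_small // modn_small // addn0.
Qed.

Lemma qr_wrap t A B q r : 0 < B -> t + A = q * B + r -> r.+1 = B ->
  (t.+1 + A) %/ B = q.+1 /\ (t.+1 + A) %% B = 0.
Proof.
move=> hB e hr. have -> : t.+1 + A = q.+1 * B by rewrite mulSn; move: e; rewrite -hr; slia.
by rewrite mulnK // modnMl.
Qed.

Lemma adv_eq j x : advance (Pebble j x x) = Pebble j x x.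
Proof. by rewrite /advance /= eqxx. Qed.

Lemma adv_ne j X D : X <> D ->
  advance (Pebble j (Some (Posz X)) (Some (Posz D))) =
  Pebble j (Some (Posz X - 2)%R) (Some (Posz D)).
Proof. move=> h. rewrite /advance /=. case: eqP => // -[] [] //. Qed.

Lemma nomove N j t : 0 < j -> ((t + 2^j) %% 2^j.+1).+1 < 2^j.+1 ->
  advance (fp N j t) = fp N j t.+1 /\
  ~~ xle (position (advance (fp N j t))) (Some (Posz t.+1)).
Proof.
move=> j0 hr. have [a ha] := pow_even j0.
have hB : 2^j.+1 = 2 * 2^j by rewrite expnS.
have e := divn_eq (t + 2^j) (2^j.+1).
have Bp : 0 < 2^j.+1 by rewrite expn_gt0.
have [q1 r1] := qr_next Bp e hr.
rewrite /fp q1 r1.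
move: e hr. set q := _ %/ _. set r := _ %% _. move=> e hr.
rewrite /fq. rewrite hB ha in e hr *.
case: eqP => [q0|qn0].
  rewrite adv_eq /= lez_nat -ltnNge; split => //. rewrite q0 in e. slia.
case: ifP => hN.
  by rewrite adv_eq.
have [hle|hgt] := leqP (2 * a) (2 * r).
  have -> : 2 * a - 2 * r = 0 by slia.
  have -> : 2 * a - 2 * r.+1 = 0 by slia.
  rewrite addn0 adv_eq /= lez_nat -ltnNge. split => //.
  slia.
rewrite adv_ne; last by slia.
rewrite subz2; last by slia.
split. congr Pebble. congr Some. congr Posz. slia.
rewrite /= lez_nat -ltnNge. slia.
Qed.

Lemma bwd N j X D : backward N (Pebble j (Some (Posz X)) (Some (Posz D))) =
  if D + 2^j.+1 <= N then Pebble j (Some (Posz (X + 3 * 2^j))) (Some (Posz (D + 2^j.+1)))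
  else Pebble j None None.
Proof. by rewrite /backward /= /S_inc /D_inc -!PoszD lez_nat. Qed.

Lemma moves N j t : 0 < j -> ((t + 2^j) %% 2^j.+1).+1 = 2^j.+1 -> t.+1 <= N ->
  position (advance (fp N j t)) = Some (Posz t.+1) /\
  backward N (advance (fp N j t)) = fp N j t.+1.
Proof.
move=> j0 hr tN.
have hB : 2^j.+1 = 2 * 2^j by rewrite expnS.
have e := divn_eq (t + 2^j) (2^j.+1).
have Bp : 0 < 2^j.+1 by rewrite expn_gt0.
have [q1 r1] := qr_wrap Bp e hr.
rewrite /fp q1 r1.
move: e hr. set q := _ %/ _. set r := _ %% _. move=> e hr.
rewrite /fq /=. rewrite hB in e hr *.
case: eqP => [q0|qn0].
  rewrite q0 in e. rewrite adv_eq /=. split. congr Some. congr Posz. slia.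
  rewrite bwd. rewrite ?subn0 ?muln0 ?addn0 ?mul1n.
  case: leqP => h1; case: leqP => h2 //; try (exfalso; slia).
  congr Pebble. congr Some. congr Posz. slia. congr Some. congr Posz. slia.
case: ifP => hN.
  exfalso. move: hN.
  set QB := q * _ in e *. slia.
have -> : 2^j - 2 * r = 0 by slia.
rewrite addn0 adv_eq /=. split.
  congr Some. congr Posz. set QB := q * _ in e *. slia.
rewrite bwd ?subn0 ?addn0 hB [q.+1 * _]mulSn.
set QB := q * _ in e hN *.
case: leqP => h1; case: leqP => h2 //; try (exfalso; slia).
congr Pebble. congr Some. congr Posz. slia. congr Some. congr Posz. slia.
Qed.

Definition mvb j t := ((t + 2^j) %% 2^j.+1).+1 == 2^j.+1.

Lemma mv_dvd j t : mvb j t = (2^j.+1 %| t.+1 + 2^j).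
Proof.
have e := divn_eq (t + 2^j) (2^j.+1).
have Bp : 0 < 2^j.+1 by rewrite expn_gt0.
have rB : (t + 2^j) %% 2^j.+1 < 2^j.+1 by rewrite ltn_pmod.
rewrite /mvb /dvdn. case: (ltngtP ((t + 2^j) %% 2^j.+1).+1 (2^j.+1)) => h.
- have [_ ->] := qr_next Bp e h. by [].
- by exfalso; move: h; rewrite ltnS leqNgt rB.
- by have [_ ->] := qr_wrap Bp e h.
Qed.

Lemma mv_uniq j j' t : mvb j t -> mvb j' t -> j = j'.
Proof.
have key : forall a b, a < b -> mvb a t -> mvb b t -> False.
  move=> a b ab; rewrite !mv_dvd => ha hb.
  have d1 : 2^a.+1 %| 2^b by rewrite dvdn_exp2l.
  have d2 : 2^a.+1 %| t.+1.
    have : 2^a.+1 %| t.+1 + 2^b by apply: dvdn_trans hb; rewrite dvdn_exp2l // ltnS ltnW.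
    by rewrite dvdn_addl.
  move: ha; rewrite dvdn_addr // dvdn_Pexp2l //. by rewrite ltnn.
move=> h1 h2. case: (ltngtP j j') => h //.
- by exfalso; apply: (key _ _ h h1 h2).
- by exfalso; apply: (key _ _ h h2 h1).
Qed.

Lemma mv_odd j t : 0 < j -> odd t.+1 -> ~~ mvb j t.
Proof.
move=> j0 ho. rewrite mv_dvd. apply/negP => /(dvdn_trans (dvdn_exp2l 2 (isT : 1 <= j.+1))).
rewrite expn1 dvdn2 oddD ho oddX. by case: j j0.
Qed.

Lemma mv_exists t k : ~~ odd t.+1 -> t.+1 <= 2^k -> exists2 j, 0 < j <= k & mvb j t.
Proof.
move=> he hk.
have [m cm em] := pfactor_coprime (isT : prime 2) (isT : 0 < t.+1).
set j := logn 2 t.+1 in em.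
have mo : odd m by rewrite -coprimen2 coprime_sym.
exists j.
  apply/andP; split.
    case: (posnP j) => // j0. move: he. by rewrite em j0 muln1 mo.
  rewrite -(leq_exp2l _ _ (isT : 1 < 2)). apply: leq_trans hk.
  rewrite em leq_pmull //. by case: m mo {cm em}.
rewrite mv_dvd em.
have -> : m * 2 ^ j + 2 ^ j = (m.+1./2) * 2^j.+1.
  rewrite -mulSnr expnS mulnA. congr (_ * _).
  rewrite -{1}(odd_double_half m.+1) /= mo add0n. by rewrite -muln2 mulnC.
by rewrite dvdn_mull.
Qed.

Lemma divmod q r B : 0 < B -> r < B -> (q * B + r) %/ B = q /\ (q * B + r) %% B = r.
Proof. move=> hB hr. by rewrite divnMDl // modnMDl divn_small // modn_small // addn0. Qed.

Lemma final_pebble k j : 1 <= k -> 0 < j <= k.+1 ->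
  ~~ discarded (fp (2^k.+1) j (2^k)) ->
  position (fp (2^k.+1) j (2^k)) = destination (fp (2^k.+1) j (2^k)).
Proof.
move=> k1 /andP [j0 jk]. rewrite /fp.
have Bp : 0 < 2^j.+1 by rewrite expn_gt0.
have hjlt : 2^j < 2^j.+1 by rewrite ltn_exp2l.
case: (ltngtP j k) => hj.
- have [m km] : exists m, k = j.+1 + m by exists (k - j.+1); rewrite subnKC.
  have e : 2^k + 2^j = 2^m * 2^j.+1 + 2^j by rewrite km expnD mulnC.
  rewrite e. have [-> ->] := divmod (2^m) Bp hjlt.
  rewrite /fq. have -> : (2^m == 0) = false by apply/negbTE; rewrite -lt0n expn_gt0.
  case: ifP => _ //.
  have -> : 2^j - 2 * 2^j = 0 by apply/eqP; rewrite subn_eq0 leq_pmull.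
  by rewrite addn0.
- have -> : j = k.+1 by apply/eqP; rewrite eqn_leq jk hj.
  rewrite divn_small; first by []. rewrite !expnS. set a := 2^k. have : 0 < a by rewrite expn_gt0. slia.
- subst j. have e : 2^k + 2^k = 1 * 2^k.+1 + 0 by rewrite mul1n addn0 expnS mul2n addnn.
  rewrite e. have [-> ->] := divmod 1 Bp (expn_gt0 2 k.+1).
  rewrite /fq /=. case: ifP => // h. exfalso. move/negbT: h. rewrite -leqNgt mul1n.
  set a := 2^k.+1. have : 0 < 2^k by rewrite expn_gt0. slia.
Qed.


Import Order.TTheory GRing.Theory Num.Theory.

Definition pleT : rel pebble := fun p q => xle (position p) (position q).

Lemma xle_refl x : xle x x.
Proof. by case: x => //= a; rewrite lexx. Qed.

Lemma pleT_total : total pleT.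
Proof.
move=> [[j1 a] b] [[j2 c] d]; rewrite /pleT /position /=.
case: a => [a|]; case: c => [c|] //=; exact: le_total.
Qed.



Lemma nomv_lt j t : ~~ mvb j t -> ((t + 2^j) %% 2^j.+1).+1 < 2^j.+1.
Proof.
rewrite /mvb => h. rewrite ltn_neqAle h /=. by rewrite ltn_pmod // expn_gt0.
Qed.

Lemma mv_eq j t : mvb j t -> ((t + 2^j) %% 2^j.+1).+1 = 2^j.+1.
Proof. by move/eqP. Qed.

Lemma inv_run k t : t <= 2^k -> (run k.+1 t).1 = t /\
  perm_eq (run k.+1 t).2 [seq fp (2^k.+1) j t | j <- iota 1 k.+1].
Proof.
set N := 2^k.+1. set I := iota 1 k.+1.
have NK : 2^k < N by rewrite /N ltn_exp2l.
elim: t => [|t IH] ht.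
  split; first by [].
  have -> : [seq fp N j 0 | j <- I] =
    [seq Pebble j (Some (Posz (2 ^ j))) (Some (Posz (2 ^ j))) | j <- I].
    apply: eq_map => j. by rewrite /fp /fq add0n divn_small ?modn_small ?ltn_exp2l.
  by [].
rewrite /run iterS -/(run k.+1 t).
have [IH1 IH2] := IH (ltnW ht).
move: IH1 IH2; case: (run k.+1 t) => c l IH1 hl. change (c = t) in IH1. subst c. change (is_true (perm_eq l [seq fp N j t | j <- I])) in hl.
rewrite /step.
have -> : (t == 2^k.+1) = false.
  apply/negbTE. rewrite neq_ltn. apply/orP; left. exact: leq_ltn_trans (ltnW ht) NK.
have tN : t.+1 <= N by apply: ltnW; exact: leq_ltn_trans ht NK.
set l1 := sort_pebbles (map advance l).
have hl1 : perm_eq l1 [seq advance (fp N j t) | j <- I].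
  rewrite /l1 /sort_pebbles perm_sort.
  apply: perm_trans (perm_map advance hl) _. rewrite -map_comp. exact: perm_refl.
have memI : forall j, j \in I -> 0 < j by move=> j; rewrite mem_iota => /andP [].
case: ifP => he.
  case El1 : l1 => [|h rest].
    by move: (perm_size hl1); rewrite El1 size_map size_iota.
  have [j0 hj0 mv0] := mv_exists he ht.
  have j0p : 0 < j0 by case/andP: hj0.
  have j0I : j0 \in I. rewrite mem_iota. case/andP: hj0 => a b. apply/andP; split => //. rewrite add1n ltnS. exact: leqW.
  have sl1 : sorted pleT l1 by exact: sort_sorted pleT_total _.
  have allh : forall x, x \in l1 -> pleT h x.
    move=> x. rewrite El1 in_cons => /orP [/eqP ->|xr]; first exact: xle_refl.
    rewrite El1 /= in sl1.
    have := order_path_min _ sl1. 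
    move=> /(_ _) /allP; apply => //.
    move=> a b d; rewrite /pleT; case: (position a) => [a'|]; case: (position b) => [b'|];
      case: (position d) => [d'|] //=; exact: le_trans.
  have hin : h \in [seq advance (fp N j t) | j <- I] by rewrite -(perm_mem hl1) El1 mem_head.
  case/mapP: hin => j jI hj.
  have [pos0 _] := moves j0p (mv_eq mv0) tN.
  have mvj : mvb j t.
    apply/negPn/negP => nm.
    have [_ hlt] := nomove N (memI _ jI) (nomv_lt nm).
    move/negP: hlt; apply. rewrite -hj -pos0.
    apply: allh. rewrite (perm_mem hl1). by apply/mapP; exists j0.
  have [_ bk] := moves (memI _ jI) (mv_eq mvj) tN.
  split => //.
  rewrite /sort_pebbles perm_sort.
  have ur : uniq I by exact: iota_uniq.
  have E : [seq fp N i t.+1 | i <- rem j I] = [seq advance (fp N i t) | i <- rem j I].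
    apply/eq_in_map => i. rewrite mem_rem_uniq // inE => /andP [ij iI].
    have nmi : ~~ mvb i t by apply/negP => m; move/eqP: ij; apply; exact: mv_uniq m mvj.
    by have [-> _] := nomove N (memI _ iI) (nomv_lt nmi).
  apply: (@perm_trans _ [seq fp N i t.+1 | i <- j :: rem j I]); last first.
    by rewrite perm_sym; apply: perm_map; exact: perm_to_rem.
  rewrite /= E -bk hj perm_cons.
  have := hl1. rewrite El1 hj.
  have p2 : perm_eq [seq advance (fp N i t) | i <- I] [seq advance (fp N i t) | i <- j :: rem j I].
    by apply: perm_map; exact: perm_to_rem.
  move/perm_trans/(_ p2). by rewrite /= perm_cons.
split => //.
apply: perm_trans hl1 _.
have -> // : [seq advance (fp N j t) | j <- I] = [seq fp N j t.+1 | j <- I].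
apply/eq_in_map => j jI.
have ho : odd t.+1 by apply: negbFE.
by have [-> _] := nomove N (memI _ jI) (nomv_lt (mv_odd (memI _ jI) ho)).
Qed.

Theorem corollary1 (k : nat) : 1 <= k ->
  let n := 2 ^ k.+1 in
  forall p : pebble, p \in (run k.+1 (n %/ 2)).2 ->
    ~~ discarded p -> position p = destination p.
Proof.
move=> k1 n p. have -> : n %/ 2 = 2^k by rewrite /n expnS mulKn.
have [_ hp] := inv_run (leqnn (2^k)).
rewrite (perm_mem hp) => /mapP [j jI ->].
apply: final_pebble => //. by move: jI; rewrite mem_iota add1n ltnS.
Qed.
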